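(* Let $\mathcal{A}=\{\mathbf{A},\mathbf{B},\mathbf{C},\mathbf{D}\}$, let $\mathcal{R}^\dagger$ be the symmetric relation on $\mathcal{A}$ whose related pairs are exactly $\{\mathbf{A},\mathbf{B}\}$, $\{\mathbf{B},\mathbf{D}\}$, $\{\mathbf{D},\mathbf{C}\}$, and let $\mathcal{H}$ be the base graph on $\{1,\dots,n\}$ defined as follows: if $n$ is even, $\mathcal{H}$ has edges $\{\sigma(i),\sigma(i+1)\}$, $i=1,\dots,n$ (indices modulo $n$), for some permutation $\sigma$ of $\{1,\dots,n\}$; if $n$ is odd, for a fixed vertex $u$ and a bijection $\sigma$ from $\{1,\dots,n-1\}$ onto $\{1,\dots,n\}\setminus\{u\}$, $\mathcal{H}$ has edges $\{\sigma(i),\sigma(i+1)\}$, $i=1,\dots,n-1$ (indices modulo $n-1$), and $u$ is isolated. Let $\mu_+=\frac{1+\sqrt5}{2}$ and $\mu_-=\frac{1-\sqrt5}{2}$. Then there exist at least $(\sqrt2)^{n-1}$ shapes $S$ (with respect to $\mathcal{H}$ and $\mathcal{R}^\dagger$) such that the number of sequences $v\in\mathcal{A}^n$ with $\mathcal{H}_{\mathcal{R}^\dagger}(v)=S$ is at least $2(\mu_+^n+\mu_-^n)$.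
   Context: For a sequence $v=(x_1,\dots,x_n)\in\mathcal{A}^n$, its shape $\mathcal{H}_{\mathcal{R}^\dagger}(v)$ is the graph with vertex set $\{1,\dots,n\}$ and edge set $\{\{i,k\}\in E_{\mathcal{H}}:(x_i,x_k)\in\mathcal{R}^\dagger\}$. A graph $S$ on $\{1,\dots,n\}$ is a shape if $S=\mathcal{H}_{\mathcal{R}^\dagger}(v)$ for some $v\in\mathcal{A}^n$; the sequences $v$ with $\mathcal{H}_{\mathcal{R}^\dagger}(v)=S$ are said to fold into $S$. *)

(* Defs.v *)
From Stdlib Require Import Reals.
From mathcomp Require Import all_boot perm.
Set Implicit Arguments. Unset Strict Implicit. Unset Printing Implicit Defensive.

Definition letter := 'I_4.
Definition lA : letter := inord 0.
Definition lB : letter := inord 1.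
Definition lC : letter := inord 2.
Definition lD : letter := inord 3.

Definition Rdag (x y : letter) : bool :=
  [|| (x == lA) && (y == lB), (x == lB) && (y == lA),
      (x == lB) && (y == lD), (x == lD) && (y == lB),
      (x == lD) && (y == lC) | (x == lC) && (y == lD)].

(* Graphs on the vertex set {1..n} (encoded as 'I_n) are given by their edge
   sets, each edge being an unordered pair {i,k} (a 2-element set). *)
Definition graph (n : nat) := {set {set 'I_n}}.

Definition cycle_edges (m n : nat) (s : 'I_m -> 'I_n) : graph n :=
  [set [set s i; s (ordS i)] | i : 'I_m].

Definition base_graph (n : nat) (H : graph n) : Prop :=
  (~~ odd n -> exists sigma : {perm 'I_n}, H = cycle_edges sigma) /\
  (odd n -> exists (u : 'I_n) (sigma : 'I_n.-1 -> 'I_n),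
      injective sigma /\ [set sigma i | i : 'I_n.-1] = ~: [set u] /\
      H = cycle_edges sigma).

Definition seqA (n : nat) := {ffun 'I_n -> letter}.

Definition shape (n : nat) (H : graph n) (v : seqA n) : graph n :=
  [set e in H | [exists i, exists k, (e == [set i; k]) && Rdag (v i) (v k)]].

Definition is_shape (n : nat) (H : graph n) (S : graph n) : bool :=
  [exists v : seqA n, shape H v == S].

Definition nfold (n : nat) (H : graph n) (S : graph n) : nat :=
  #|[set v : seqA n | shape H v == S]|.

Local Open Scope R_scope.
Definition mu_plus : R := (1 + sqrt 5) / 2.
Definition mu_minus : R := (1 - sqrt 5) / 2.

(* Main.v *)
Require Import Defs.
From Stdlib Require Import Reals Lra Lia.
From mathcomp Require Import all_boot perm.
From mathcomp Require Import zify.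
Set Implicit Arguments. Unset Strict Implicit. Unset Printing Implicit Defensive.

Definition Rn (a b : nat) : bool :=
  [|| (a == 0) && (b == 1), (a == 1) && (b == 0),
      (a == 1) && (b == 3), (a == 3) && (b == 1),
      (a == 3) && (b == 2) | (a == 2) && (b == 3)].
Lemma vA : nat_of_ord lA = 0. Proof. by rewrite /lA inordK. Qed.
Lemma vB : nat_of_ord lB = 1. Proof. by rewrite /lB inordK. Qed.
Lemma vC : nat_of_ord lC = 2. Proof. by rewrite /lC inordK. Qed.
Lemma vD : nat_of_ord lD = 3. Proof. by rewrite /lD inordK. Qed.
Lemma RdagE x y : Rdag x y = Rn (val x) (val y).
Proof. by rewrite /Rdag /Rn -!val_eqE /= vA vB vC vD. Qed.
Lemma Rdag_sym x y : Rdag x y = Rdag y x.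
Proof. rewrite !RdagE; case: x => [[|[|[|[|?]]]] ?] //; case: y => [[|[|[|[|?]]]] ?] //. Qed.
Lemma Rdag_irr x : Rdag x x = false.
Proof. rewrite !RdagE; by case: x => [[|[|[|[|?]]]] ?]. Qed.

Definition cutset n (H : graph n) (U : {set 'I_n}) : graph n :=
  [set e in H | [exists i, exists k, (e == [set i; k]) && (i \in U) && (k \notin U)]].

Lemma pair_cases (T : finType) (a b i k : T) :
  [set a; b] = [set i; k] -> ((i == a) || (i == b)) && ((k == a) || (k == b)).
Proof. by move=> E; rewrite -!in_set2 E !in_set2 !eqxx orbT. Qed.

Lemma cut_pair n (H : graph n) U a b :
  ([set a; b] \in cutset H U) = ([set a; b] \in H) && ((a \in U) != (b \in U)).
Proof.
rewrite inE; congr (_ && _); apply/existsP/idP.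
- case=> i /existsP [k /andP [/andP [/eqP E iU] kU]].
  case/andP: (pair_cases E) => /orP [] /eqP ei /orP [] /eqP ek; subst i k.
  + by rewrite iU in kU.
  + by rewrite iU (negbTE kU).
  + by rewrite iU (negbTE kU).
  + by rewrite iU in kU.
- case Ha: (a \in U); case Hb: (b \in U) => //= _.
  + by exists a; apply/existsP; exists b; rewrite eqxx Ha Hb.
  + by exists b; apply/existsP; exists a; rewrite setUC eqxx Ha Hb.
Qed.

Lemma shape_pair n (H : graph n) (v : seqA n) a b :
  ([set a; b] \in Defs.shape H v) = ([set a; b] \in H) && Rdag (v a) (v b).
Proof.
rewrite inE; congr (_ && _); apply/existsP/idP.
- case=> i /existsP [k /andP [/eqP E R]].
  case/andP: (pair_cases E) => /orP [] /eqP ei /orP [] /eqP ek; subst i k.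
  + by rewrite Rdag_irr in R.
  + by [].
  + by rewrite Rdag_sym.
  + by rewrite Rdag_irr in R.
- by move=> R; exists a; apply/existsP; exists b; rewrite eqxx R.
Qed.

Lemma shape_cut n (H : graph n) (v : seqA n) (U : {set 'I_n}) :
  (forall a b, Rdag (v a) (v b) = ((a \in U) != (b \in U))) -> Defs.shape H v = cutset H U.
Proof.
move=> Hv; apply/setP => e.
case Hp: [exists i, exists k, e == [set i; k]].
- case/existsP: Hp => i /existsP [k /eqP ->].
  by rewrite shape_pair cut_pair Hv.
- have F1 : e \in Defs.shape H v = false.
    apply/negbTE/negP; rewrite inE => /andP [_ /existsP [i /existsP [k /andP [E _]]]].
    by move/negbT: Hp => /negP; apply; apply/existsP; exists i; apply/existsP; exists k.
  have F2 : e \in cutset H U = false.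
    apply/negbTE/negP; rewrite inE => /andP [_ /existsP [i /existsP [k /andP [/andP [E _] _]]]].
    by move/negbT: Hp => /negP; apply; apply/existsP; exists i; apply/existsP; exists k.
  by rewrite F1 F2.
Qed.

Definition boxv n (U : {set 'I_n}) (c : bool) (f : {ffun 'I_n -> bool}) : seqA n :=
  [ffun x => if c then (if x \in U then lB else if f x then lA else lD)
                  else (if x \in U then lD else if f x then lB else lC)].

Lemma box_rel n (U : {set 'I_n}) c f (a b : 'I_n) :
  Rdag (boxv U c f a) (boxv U c f b) = ((a \in U) != (b \in U)).
Proof.
rewrite !ffunE RdagE; case: c; case: (a \in U); case: (b \in U); case: (f a); case: (f b);
  by rewrite /= ?vA ?vB ?vC ?vD.
Qed.

Lemma pff_false n (f : {ffun 'I_n -> bool}) (U : {set 'I_n}) x :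
  f \in pffun_on false (~: U) predT -> x \in U -> f x = false.
Proof.
case/pffun_onP => /subsetP sub _ xU; apply/negP => fx.
by have := sub x; rewrite !inE fx xU => /(_ isT).
Qed.

Lemma nfold_cut n (H : graph n) (U : {set 'I_n}) : (0 < n)%N -> (2 * 2 ^ (n - #|U|) <= nfold H (cutset H U))%N.
Proof.
move=> n0.
pose P := setX [set: bool] [set f : {ffun 'I_n -> bool} | f \in pffun_on false (~: U) predT].
have cP : #|P| = (2 * 2 ^ (n - #|U|))%N.
  rewrite cardsX cardsT card_bool cardsE card_pffun_on.
  have -> : #|~: U| = n - #|U| by have h := cardsC U; rewrite card_ord in h; lia.
  by congr (_ * _ ^ _); apply: card_bool.
rewrite /nfold -cP.
have inj : {in P &, injective (fun cf => boxv U cf.1 cf.2)}.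
  move=> [c f] [c' f']; rewrite !inE /= => Pf Pf' E.
  have x0 : 'I_n := Ordinal n0.
  have Ec : c = c'.
    have := congr1 (fun v : seqA n => nat_of_ord (v x0)) E; clear E; rewrite /= !ffunE.
    by case: c; case: c'; case: (x0 \in U); case: (f x0); case: (f' x0); rewrite ?vA ?vB ?vC ?vD.
  rewrite -{}Ec in E Pf' *; congr pair; apply/ffunP => x.
  case xU: (x \in U); first by rewrite (pff_false Pf xU) (pff_false Pf' xU).
  have := congr1 (fun v : seqA n => nat_of_ord (v x)) E; clear E; rewrite /= !ffunE xU.
  by case: c; case: (f x); case: (f' x); rewrite ?vA ?vB ?vC ?vD.
rewrite -(card_in_imset inj); apply: subset_leq_card; apply/subsetP => v /imsetP [[c f] _ ->].
by rewrite inE (shape_cut _ (box_rel U c f)).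
Qed.

Fixpoint luc (n : nat) : nat :=
  match n with 0 => 2 | 1 => 1 | (k.+1 as k1).+1 => luc k1 + luc k end.

Open Scope R_scope.
Lemma mu_plus_sq : (mu_plus ^ 2 = mu_plus + 1).
Proof.
unfold mu_plus; have h := sqrt_sqrt 5 ltac:(lra); simpl; nra.
Qed.
Lemma mu_minus_sq : (mu_minus ^ 2 = mu_minus + 1).
Proof.
unfold mu_minus; have h := sqrt_sqrt 5 ltac:(lra); simpl; nra.
Qed.

Lemma lucE n : (mu_plus ^ n + mu_minus ^ n = INR (luc n)).
Proof.
suff: (mu_plus ^ n + mu_minus ^ n = INR (luc n)) /\
       (mu_plus ^ n.+1 + mu_minus ^ n.+1 = INR (luc n.+1)) by case.
elim: n => [|n [IH1 IH2]].
  split; simpl; unfold mu_plus, mu_minus; lra.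
split => //.
have e1 : (mu_plus ^ n.+2 = mu_plus ^ n.+1 + mu_plus ^ n).
  by rewrite -addn2 pow_add mu_plus_sq -addn1 pow_add /=; ring.
have e2 : (mu_minus ^ n.+2 = mu_minus ^ n.+1 + mu_minus ^ n).
  by rewrite -addn2 pow_add mu_minus_sq -addn1 pow_add /=; ring.
have -> : INR (luc n.+2) = INR (luc n.+1) + INR (luc n) by rewrite -plus_INR.
rewrite e1 e2 -IH1 -IH2; ring.
Qed.
Close Scope R_scope.

Open Scope R_scope.
Definition goodset n (H : graph n) : {set graph n} :=
  [set S : graph n | is_shape H S &&
          (if Rle_dec (2 * (mu_plus ^ n + mu_minus ^ n)) (INR (nfold H S))
           then true else false)].
Close Scope R_scope.

Lemma INR2 k : Rmult 2 (INR k) = INR (2 * k).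
Proof. have -> : (2 * k)%N = Nat.mul 2 k by []. rewrite mult_INR /=; ring. Qed.

Lemma good_of_count n (H : graph n) S :
  is_shape H S -> (2 * luc n <= nfold H S)%N -> S \in goodset H.
Proof.
move=> sh le; rewrite inE sh /=; case: Rle_dec => // [[]].
rewrite lucE INR2; apply: le_INR; exact/leP.
Qed.

Lemma cut_good n (H : graph n) (U : {set 'I_n}) :
  (0 < n)%N -> (luc n <= 2 ^ (n - #|U|))%N -> cutset H U \in goodset H.
Proof.
move=> n0 hL; apply: good_of_count.
  by apply/existsP; exists (boxv U true [ffun=> true]); rewrite (shape_cut _ (box_rel U true _)).
apply: leq_trans (nfold_cut H U n0); by rewrite leq_mul2l.
Qed.

Lemma cut_cycle_inj n m (s : 'I_m.+1 -> 'I_n) (G G' : {set 'I_m.+1}) :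
  injective s -> ord0 \notin G -> ord0 \notin G' ->
  cutset (cycle_edges s) (s @: G) = cutset (cycle_edges s) (s @: G') -> G = G'.
Proof.
move=> si n0 n0' E.
have key : forall i : 'I_m.+1, (i \in G) = (i \in G') -> (ordS i \in G) = (ordS i \in G').
  move=> i Ei.
  have He : [set s i; s (ordS i)] \in cycle_edges s by apply/imsetP; exists i.
  move: (congr1 (fun S : graph n => [set s i; s (ordS i)] \in S) E) => /=.
  rewrite !cut_pair He /= !mem_imset // Ei.
  by case: (i \in G'); case: (ordS i \in G); case: (ordS i \in G').
have all : forall j, (j < m.+1)%N -> (inord j \in G) = (inord j \in G').
  elim=> [|j IH] hj.
    have -> : (inord 0 : 'I_m.+1) = ord0 by apply/val_inj; rewrite /= inordK.
    by rewrite (negbTE n0) (negbTE n0').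
  have := key (inord j) (IH (ltnW hj)).
  have -> // : ordS (inord j) = inord j.+1 :> 'I_m.+1.
  apply/val_inj; rewrite /= !inordK ?modn_small //; lia.
apply/setP => i; rewrite -(inord_val i); apply: all; exact: ltn_ord.
Qed.

Lemma family_good n m (s : 'I_m.+1 -> 'I_n) (I : finType) (G : I -> {set 'I_m.+1}) K :
  (0 < n)%N -> injective s -> injective G -> (forall x, ord0 \notin G x) ->
  (forall x, #|G x| <= K)%N ->
  (luc n <= 2 ^ (n - K))%N -> (#|I| <= #|goodset (cycle_edges s)|)%N.
Proof.
move=> n0 si Gi G0 GK hL.
pose f x := cutset (cycle_edges s) (s @: G x).
have fi : injective f.
  by move=> x y E; apply: Gi; apply: (cut_cycle_inj si (G0 x) (G0 y) E).
apply: (@leq_trans #|f @: [set: I]|); first by rewrite card_imset // cardsT.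
apply: subset_leq_card; apply/subsetP => S /imsetP [x _ ->].
apply: cut_good => //; apply: leq_trans hL _; apply: leq_pexp2l => //.
by apply: leq_sub2l; rewrite card_imset.
Qed.

Lemma luc_mono k : (0 < k)%N -> (luc k <= luc k.+1)%N.
Proof. by case: k => // k _; rewrite [luc k.+2]/= leq_addr. Qed.

Lemma luc_step k : (2 <= k)%N -> (luc k.+4 <= 8 * luc k)%N.
Proof.
move=> hk.
have e : luc k.+4 = 3 * luc k.+1 + 2 * luc k.
  have -> : luc k.+4 = luc k.+3 + luc k.+2 by [].
  have -> : luc k.+3 = luc k.+2 + luc k.+1 by [].
  have -> : luc k.+2 = luc k.+1 + luc k by [].
  lia.
have h1 : (luc k.+1 <= 2 * luc k)%N.
  case: k hk {e} => [|[|k]] // _.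
  have := luc_mono (k := k.+1) isT.
  have -> : luc k.+3 = luc k.+2 + luc k.+1 by [].
  lia.
lia.
Qed.

Lemma luc_bound n : (0 < n)%N -> n <> 2 -> n <> 6 -> (luc n <= 2 ^ (n - (n + 2) %/ 4))%N.
Proof.
elim: n {-2}n (leqnn n) => [|N IH] n hn n0 n2 n6; first by lia.
have [small|big] := leqP n 10.
  by do 11! (case: n hn n0 n2 n6 small => [|n] hn n0 n2 n6 small //).
have -> : n = (n - 4).+4 by lia.
apply: leq_trans (luc_step _) _; first by lia.
have := IH (n - 4) ltac:(lia) ltac:(lia) ltac:(lia) ltac:(lia).
have -> : ((n - 4).+4 - ((n - 4).+4 + 2) %/ 4) = (n - 4 - (n - 4 + 2) %/ 4) + 3 by lia.
rewrite expnD; lia.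
Qed.

Section Blk.
Variables (m b e : nat).
Hypothesis hb : (4 * b + 2 * (e - 1) <= m.+1)%N.
Hypothesis he : (e <= 2)%N.

Definition blk (x : {ffun 'I_b -> 'I_4} * 'I_e) : {set 'I_m.+1} :=
  [set i : 'I_m.+1 | [exists j : 'I_b, (x.1 j != ord0) && (nat_of_ord i == 4 * j + x.1 j)]
                     || ((nat_of_ord x.2 == 1) && (nat_of_ord i == 4 * b + 1))].

Lemma nz4 (a : 'I_4) : (a != ord0) = (nat_of_ord a != 0).
Proof. by rewrite -val_eqE. Qed.

Lemma blk_ord0 x : ord0 \notin blk x.
Proof.
rewrite inE negb_or; apply/andP; split.
  apply/negP => /existsP [j /andP [nz /eqP h]]; move: nz; rewrite nz4 => /eqP nz; simpl in h. lia.
by apply/negP => /andP [_ /eqP h]; simpl in h; lia.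
Qed.

Lemma blk_card x : (#|blk x| <= b + (e - 1))%N.
Proof.
have sub : blk x \subset [set inord (4 * j + x.1 j) | j : 'I_b] :|:
                         (if nat_of_ord x.2 == 1 then [set inord (4 * b + 1)] else set0).
  apply/subsetP => i; rewrite inE => /orP [/existsP [j /andP [_ /eqP h]] | /andP [h1 /eqP h]].
    by rewrite inE; apply/orP; left; apply/imsetP; exists j => //; rewrite -h inord_val.
  by rewrite inE h1 -h inord_val inE eqxx orbT.
apply: leq_trans (subset_leq_card sub) _; rewrite cardsU.
apply: leq_trans (leq_subr _ _) _; apply: leq_add.
  by apply: leq_trans (leq_imset_card _ _) _; rewrite card_ord.
case: ifP => h; last by rewrite cards0.
by rewrite cards1; have := ltn_ord x.2; move/eqP: h => h; lia.
Qed.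

Lemma blk_half x y : blk x = blk y -> forall j, x.1 j != ord0 -> y.1 j = x.1 j.
Proof.
move=> E j nz.
have lt : (4 * j + x.1 j < m.+1)%N by have := ltn_ord j; have := ltn_ord (x.1 j); lia.
have : inord (4 * j + x.1 j) \in blk x.
  by rewrite inE; apply/orP; left; apply/existsP; exists j; rewrite nz /= inordK.
rewrite E inE inordK // => /orP [/existsP [j' /andP [nz' /eqP h]] | /andP [_ /eqP h]].
  move: nz nz'; rewrite !nz4 => /eqP nz /eqP nz'; have := ltn_ord (x.1 j); have := ltn_ord (y.1 j');
  have := ltn_ord j; have := ltn_ord j' => *.
  have ejj : j = j' by apply/val_inj; simpl; lia.
  subst j'; apply/val_inj; simpl; lia.
have := ltn_ord (x.1 j); have := ltn_ord j; lia.
Qed.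

Lemma blk_half2 x y : blk x = blk y -> nat_of_ord x.2 == 1 -> nat_of_ord y.2 == 1.
Proof.
move=> E h1.
have lt : (4 * b + 1 < m.+1)%N by have := ltn_ord x.2; move/eqP: h1; lia.
have : inord (4 * b + 1) \in blk x by rewrite inE h1 inordK // eqxx orbT.
rewrite E inE inordK // => /orP [/existsP [j' /andP [nz' /eqP h]] | /andP [-> _] //].
have := ltn_ord (y.1 j'); have := ltn_ord j'; lia.
Qed.

Lemma blk_inj : injective blk.
Proof.
move=> [g c] [g' c'] E.
have Eg : g = g'.
  apply/ffunP => j.
  case: (boolP (g j != ord0)) => nz; first by rewrite (blk_half E nz).
  case: (boolP (g' j != ord0)) => nz'; first by rewrite (blk_half (esym E) nz').
  by move/negPn/eqP: nz => ->; move/negPn/eqP: nz' => ->.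
have Ec : c = c'.
  apply: ord_inj; case: (boolP (nat_of_ord c == 1)) => h.
    by have := blk_half2 E h; move/eqP: h => -> /eqP ->.
  case: (boolP (nat_of_ord c' == 1)) => h'.
    by have := blk_half2 (esym E) h'; rewrite (negbTE h).
  have := ltn_ord c; have := ltn_ord c'; move/eqP: h; move/eqP: h'; lia.
by rewrite Eg Ec.
Qed.

End Blk.

Definition sing m (i : 'I_m.+1) : {set 'I_m.+1} := [set j | (j == i) && (i != ord0)].

Lemma sing_inj m : injective (@sing m).
Proof.
move=> i i' E.
case: (boolP (i == ord0)) => [/eqP h0|h0].
  case: (boolP (i' == ord0)) => [/eqP -> //|h0'].
  have : i' \in sing i' by rewrite inE eqxx h0'.
  by rewrite -E inE h0 eqxx andbF.
have : i \in sing i by rewrite inE eqxx h0.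
by rewrite E inE => /andP [/eqP].
Qed.

Lemma sing_card m (i : 'I_m.+1) : (#|sing i| <= 1)%N.
Proof.
apply: leq_trans (_ : #|[set i]| <= 1)%N; last by rewrite cards1.
by apply: subset_leq_card; apply/subsetP => j; rewrite !inE => /andP [].
Qed.

Lemma sing_ord0 m (i : 'I_m.+1) : ord0 \notin sing i.
Proof. by rewrite inE; apply/negP => /andP [/eqP ->]; rewrite eqxx. Qed.

Definition ps : seq ('I_4 * 'I_4) := [:: (@Ordinal 4 0 isT, @Ordinal 4 1 isT); (@Ordinal 4 1 isT, @Ordinal 4 0 isT);
  (@Ordinal 4 1 isT, @Ordinal 4 3 isT); (@Ordinal 4 3 isT, @Ordinal 4 1 isT); (@Ordinal 4 3 isT, @Ordinal 4 2 isT); (@Ordinal 4 2 isT, @Ordinal 4 3 isT)].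
Lemma ps_uniq : uniq ps. Proof. by []. Qed.
Lemma ps_rel : all (fun p => Rdag p.1 p.2) ps. Proof. by rewrite /= !RdagE. Qed.

Lemma two_case (s : 'I_2 -> 'I_2) : injective s -> (2 <= #|goodset (cycle_edges s)|)%N.
Proof.
move=> si.
set H := cycle_edges s.
pose U := [set a : 'I_2 | a != s ord0].
pose S0 := cutset H set0.
pose S1 := cutset H U.
pose pv (p : 'I_4 * 'I_4) : seqA 2 := [ffun x => if x == s ord0 then p.1 else p.2].
have s01 : s ord_max != s ord0 by apply/negP => /eqP /si.
have shp p : Rdag p.1 p.2 -> Defs.shape H (pv p) = S1.
  move=> R; apply: shape_cut => a b; rewrite !ffunE !inE.
  case: (a == s ord0); case: (b == s ord0) => /=; by rewrite ?Rdag_irr // Rdag_sym.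
have e0 : [set s ord0; s (ordS ord0)] \in H by apply/imsetP; exists ord0.
have dS : S0 != S1.
  apply/negP => /eqP E.
  have : [set s ord0; s (ordS ord0)] \in S1.
    rewrite cut_pair e0 !inE eqxx /=.
    have -> : ordS (ord0 : 'I_2) = ord_max by apply/val_inj.
    by rewrite s01.
  by rewrite -E /S0 cut_pair !inE => /andP [_].
suff sub : [set S0; S1] \subset goodset H.
  by have := subset_leq_card sub; rewrite cards2 dS.
apply/subsetP => S; rewrite in_set2 => /orP [] /eqP ->.
  by apply: cut_good => //; rewrite cards0.
apply: good_of_count.
  apply/existsP; exists (pv (@Ordinal 4 0 isT, @Ordinal 4 1 isT)); rewrite shp //.
  by rewrite RdagE.
have pvi : {in ps &, injective pv}.
  move=> [a1 a2] [b1 b2] _ _ E.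
  have h1 := congr1 (fun v : seqA 2 => v (s ord0)) E.
  have h2 := congr1 (fun v : seqA 2 => v (s ord_max)) E.
  move: h1 h2; rewrite /= !ffunE eqxx (negbTE s01) /= => -> ->. by [].
apply: (@leq_trans #|[set pv p | p in ps]|).
  by rewrite (card_in_imset pvi) (card_uniqP ps_uniq).
apply/subset_leq_card/subsetP => v /imsetP [p pin ->].
rewrite inE shp //; exact: (allP ps_rel).
Qed.

Open Scope R_scope.
Lemma INRexp2 j : INR (2 ^ j) = 2 ^ j.
Proof.
elim: j => [|j IH]; first by rewrite expn0.
by rewrite expnS -INR2 IH /=.
Qed.

Lemma sqrt2_pow j : sqrt 2 ^ (2 * j) = INR (2 ^ j).
Proof. by rewrite pow_mult pow2_sqrt ?INRexp2 //; lra. Qed.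

Lemma sqrt2_ge1 : 1 <= sqrt 2.
Proof. rewrite -sqrt_1; apply sqrt_le_1_alt; lra. Qed.

Lemma sqrt2_le k j : (k <= 2 * j)%N -> sqrt 2 ^ k <= INR (2 ^ j).
Proof. move=> h; rewrite -sqrt2_pow; apply: Rle_pow; [exact: sqrt2_ge1 | exact/leP]. Qed.

Lemma INR_leN a b : (a <= b)%N -> INR a <= INR b.
Proof. by move=> h; apply: le_INR; apply/leP. Qed.

Lemma main_cycle n m (s : 'I_m.+1 -> 'I_n) :
  injective s -> ~~ odd m.+1 -> (n = m.+1 \/ n = m.+2) ->
  sqrt 2 ^ (n - 1) <= INR #|goodset (cycle_edges s)|.
Proof.
move=> si ev hn.
have h2 : (m.+1 %% 2 = 0)%N by rewrite modn2 (negbTE ev).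
have [n2|n2] := eqVneq n 2%N.
  have hm : m = 1%N by lia.
  subst n m.
  apply: Rle_trans (INR_leN (two_case si)).
  have := sqrt_sqrt 2 ltac:(lra); have := sqrt_pos 2; rewrite /=; nra.
have [n6|n6] := eqVneq n 6%N.
  have hm : m = 5%N by lia.
  subst n m.
  have := @family_good 6 5 s _ (@sing 5) 1 isT si (@sing_inj 5) (@sing_ord0 5) (@sing_card 5) isT.
  move/INR_leN; apply: Rle_trans; rewrite card_ord.
  have := sqrt_sqrt 2 ltac:(lra); have := sqrt_pos 2.
  replace (sqrt 2 ^ (6 - 1)) with (sqrt 2 * sqrt 2 * (sqrt 2 * sqrt 2) * sqrt 2) by (simpl; ring).
  move=> h0 h1; rewrite h1 /=; nra.
have [b [e [hM [he1 he2]]]] : exists b e, (m.+1 = 4 * b + 2 * (e - 1) /\ 1 <= e /\ e <= 2)%N.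
  exists (m.+1 %/ 4)%N, (if m.+1 %% 4 == 2 then 2 else 1)%N; case: ifP => /eqP h; lia.
have hb : (4 * b + 2 * (e - 1) <= m.+1)%N by lia.
have n0 : (0 < n)%N by lia.
have := @family_good n m s _ (@blk m b e) (b + (e - 1)) n0 si (blk_inj hb he2)
  (blk_ord0 hb he2) (blk_card hb he2) _.
have hK : (b + (e - 1) = (n + 2) %/ 4)%N by lia.
have n2' : n <> 2%N by apply/eqP.
have n6' : n <> 6%N by apply/eqP.
rewrite hK => /(_ (luc_bound n0 n2' n6')).
move/INR_leN; apply: Rle_trans.
have -> : #|{: {ffun 'I_b -> 'I_4} * 'I_e}| = (2 ^ (2 * b + (e - 1)))%N.
  rewrite card_prod card_ffun !card_ord expnD expnM.
  by have [->|->] : (e = 1 \/ e = 2)%N by lia.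
apply: sqrt2_le; lia.
Qed.
Close Scope R_scope.
Local Open Scope R_scope.

Theorem lemma2 (n : nat) (H : graph n) :
  (0 < n)%N -> base_graph H ->
  sqrt 2 ^ (n - 1)%N <=
   INR #|[set S : graph n | is_shape H S &&
          (if Rle_dec (2 * (mu_plus ^ n + mu_minus ^ n)) (INR (nfold H S))
           then true else false)]|.
Proof.
move=> n0 [Hev Hod].
change (sqrt 2 ^ (n - 1)%N <= INR #|goodset H|).
case: (boolP (odd n)) => on.
- have [u [s [si [_ ->]]]] := Hod on.
  clear Hev Hod H.
  case: n n0 on u s si => [//|[|n']] n0 on u s si.
  + have g : cutset (cycle_edges s) set0 \in goodset (cycle_edges s).
      by apply: cut_good => //; rewrite cards0.
    apply: (Rle_trans _ (INR 1)); first by rewrite /=; lra.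
    apply: INR_leN; have sub : [set cutset (cycle_edges s) set0] \subset goodset (cycle_edges s).
      by rewrite sub1set.
    by have := subset_leq_card sub; rewrite cards1.
  + apply: (main_cycle si); first by rewrite /= negbK; move: on; rewrite /= negbK.
    by right.
- have [sg ->] := Hev on.
  clear Hev Hod H.
  case: n n0 on sg => [//|n'] n0 on sg.
  apply: (main_cycle (@perm_inj _ sg)) => //; by left.
Qed.
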